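(* Let $\alpha\in[-1,1]$ and let $F_\alpha(z)=\dfrac{z(1-\alpha z)}{1-z^2}$ for $z\in E$. Then $\Re\big[(1-z^2)F_\alpha'(z)\big]>0$ for all $z\in E$; consequently $F_\alpha$ is univalent in $E$ and maps $E$ onto a domain convex in the direction of the imaginary axis. Moreover, if $f=h+\overline{g}$ is a locally univalent, sense-preserving harmonic mapping in $E$ with $h(0)=g(0)=0$, $h'(0)=1$, $g'(0)=0$ and $h+g=F_\alpha$, then $f\in S_H$ and $f$ maps $E$ onto a domain convex in the direction of the imaginary axis.
   Context: $E=\{z\in\mathbb{C}:|z|<1\}$. A harmonic mapping $f=h+\overline{g}$ on $E$ (with $h,g$ analytic) is locally univalent and sense-preserving iff $h'\neq0$ in $E$ and its dilatation $\omega=g'/h'$ satisfies $|\omega|<1$ in $E$. $S_H$ denotes the class of harmonic, univalent, sense-preserving mappings $f=h+\overline{g}$ of $E$ normalized by $f(0)=0$, $f_z(0)=1$. A domain $\Omega$ is convex in the direction of the imaginary axis if every line parallel to the imaginary axis has connected or empty intersection with $\Omega$. *)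

(* Defs.v *)
From Stdlib Require Import Reals.
Open Scope R_scope.

Definition Cx : Type := (R * R)%type.
Definition Re (z : Cx) : R := fst z.
Definition Im (z : Cx) : R := snd z.
Definition RtoC (r : R) : Cx := (r, 0).
Definition Cadd (z w : Cx) : Cx := (fst z + fst w, snd z + snd w).
Definition Copp (z : Cx) : Cx := (- fst z, - snd z).
Definition Csub (z w : Cx) : Cx := Cadd z (Copp w).
Definition Cmul (z w : Cx) : Cx :=
  (fst z * fst w - snd z * snd w, fst z * snd w + snd z * fst w).
Definition Cinv (z : Cx) : Cx :=
  (fst z / (fst z ^ 2 + snd z ^ 2), - snd z / (fst z ^ 2 + snd z ^ 2)).
Definition Cdiv (z w : Cx) : Cx := Cmul z (Cinv w).
Definition Cconj (z : Cx) : Cx := (fst z, - snd z).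
Definition Cmod (z : Cx) : R := sqrt (fst z ^ 2 + snd z ^ 2).
Definition Cx0 : Cx := (0, 0).
Definition Cx1 : Cx := (1, 0).

Definition E (z : Cx) : Prop := Cmod z < 1.

Definition has_cderiv (f : Cx -> Cx) (z l : Cx) : Prop :=
  forall eps : R, 0 < eps -> exists delta : R, 0 < delta /\
    forall w : Cx, 0 < Cmod (Csub w z) < delta ->
      Cmod (Csub (Csub (f w) (f z)) (Cmul l (Csub w z))) <= eps * Cmod (Csub w z).

Definition analytic_E_with_deriv (h h' : Cx -> Cx) : Prop :=
  forall z : Cx, E z -> has_cderiv h z (h' z).

Definition univalent_E (f : Cx -> Cx) : Prop :=
  forall z w : Cx, E z -> E w -> f z = f w -> z = w.

Definition image_E (f : Cx -> Cx) (w : Cx) : Prop := exists z : Cx, E z /\ f z = w.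

(* A set Om is convex in the direction of the imaginary axis: the intersection
   with every vertical line Re w = c is connected or empty, i.e. (being a subset
   of a line) an interval: whenever two points of Om lie on the same vertical
   line, the segment joining them lies in Om. *)
Definition convex_imag_dir (Om : Cx -> Prop) : Prop :=
  forall a b : Cx, Om a -> Om b -> Re a = Re b ->
    forall t : R, 0 <= t <= 1 -> Om (Re a, Im a + t * (Im b - Im a)).

Definition harm (h g : Cx -> Cx) (z : Cx) : Cx := Cadd (h z) (Cconj (g z)).

(* locally univalent and sense-preserving (characterization from the context):
   h' <> 0 in E and |g'/h'| < 1 in E. *)
Definition loc_univ_sense_pres (h' g' : Cx -> Cx) : Prop :=
  forall z : Cx, E z -> h' z <> Cx0 /\ Cmod (Cdiv (g' z) (h' z)) < 1.

Definition in_SH (f : Cx -> Cx) : Prop :=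
  exists h g h' g' : Cx -> Cx,
    analytic_E_with_deriv h h' /\ analytic_E_with_deriv g g' /\
    (forall z, E z -> f z = harm h g z) /\
    loc_univ_sense_pres h' g' /\
    univalent_E f /\
    f Cx0 = Cx0 /\ h' Cx0 = Cx1.

Definition F_alpha (alpha : R) (z : Cx) : Cx :=
  Cdiv (Cmul z (Csub Cx1 (Cmul (RtoC alpha) z))) (Csub Cx1 (Cmul z z)).

(* Main.v *)
From Stdlib Require Import Reals Field Ring Lra Psatz ClassicalEpsilon.
From Coquelicot Require Import Coquelicot.
Require Import Defs.
Local Open Scope R_scope.

Lemma Cmod_lt1_iff (z : C) : Complex.Cmod z < 1 <-> fst z ^ 2 + snd z ^ 2 < 1.
Proof.
  unfold Complex.Cmod. split; intro H.
  - destruct (Rlt_or_le (fst z ^ 2 + snd z ^ 2) 1) as [h|h]; auto.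
    apply sqrt_le_1_alt in h. rewrite sqrt_1 in h. lra.
  - rewrite <- sqrt_1. apply sqrt_lt_1_alt. split; [nra|lra].
Qed.

Lemma Cmod_sub_rev (a b : C) : Complex.Cmod a - Complex.Cmod b <= Complex.Cmod (a - b)%C.
Proof.
  assert (H := Cmod_triangle (a - b)%C b).
  replace (a - b + b)%C with a in H by ring. lra.
Qed.

Lemma Cmod_sub_sym (a b : C) : Complex.Cmod (a - b)%C = Complex.Cmod (b - a)%C.
Proof. replace (a - b)%C with (- (b - a))%C by ring. apply Cmod_opp. Qed.

Lemma one_minus_sq_bound (w : C) :
  1 - Complex.Cmod w ^ 2 <= Complex.Cmod (1 - w * w)%C.
Proof.
  assert (H := Cmod_sub_rev 1 (w*w)%C). rewrite Cmod_1, Cmod_mult in H. lra.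
Qed.

Lemma one_minus_sq_ne (w : C) : Complex.Cmod w < 1 -> (1 - w * w)%C <> 0%C.
Proof.
  intros Hw He. assert (H := one_minus_sq_bound w). rewrite He, Cmod_0 in H.
  assert (0 <= Complex.Cmod w) by apply Cmod_ge_0. nra.
Qed.

Notation cm := Complex.Cmod.

Lemma has_cderiv_fact (f D : C -> C) (z l : C) (r K : R) : 0 < r -> 0 <= K ->
  (forall w, cm (w - z)%C < r -> (f w - f z = D w * (w - z))%C) ->
  (forall w, cm (w - z)%C < r -> cm (D w - l)%C <= K * cm (w - z)%C) ->
  has_cderiv f z l.
Proof.
  intros Hr HK Hf HD eps Heps.
  exists (Rmin r (eps / (K + 1))). split.
  { apply Rmin_pos; auto. apply Rdiv_lt_0_compat; lra. }
  intros w [H0 H1].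
  change (cm (f w - f z - l * (w - z))%C <= eps * cm (w - z)%C).
  assert (Hwr : cm (w - z)%C < r) by (eapply Rlt_le_trans; [exact H1| apply Rmin_l]).
  assert (Hwe : cm (w - z)%C < eps / (K+1)) by (eapply Rlt_le_trans; [exact H1| apply Rmin_r]).
  rewrite Hf by auto.
  replace (D w * (w - z) - l * (w - z))%C with ((D w - l) * (w - z))%C by ring.
  rewrite Cmod_mult.
  assert (HDw := HD w Hwr).
  assert (K * cm (w - z)%C <= eps).
  { apply Rle_trans with (K * (eps / (K+1))). apply Rmult_le_compat_l; lra.
    apply Rle_trans with ((K+1) * (eps / (K+1))). apply Rmult_le_compat_r. 
    apply Rlt_le, Rdiv_lt_0_compat; lra. lra. right; field; lra. }
  apply Rmult_le_compat_r. apply Cmod_ge_0. lra.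
Qed.

Definition Qf (a : R) (w z : C) : C := (1 - RtoC a * (w + z) + w * z)%C.

Lemma F_eq a z : F_alpha a z = (z * (1 - RtoC a * z) / (1 - z * z))%C.
Proof. reflexivity. Qed.

Lemma F_diff a w z : (1 - w * w)%C <> 0%C -> (1 - z * z)%C <> 0%C ->
  (F_alpha a w - F_alpha a z = (w - z) * (Qf a w z / ((1 - w * w) * (1 - z * z))))%C.
Proof. intros. rewrite !F_eq. unfold Qf. field. auto. Qed.

Definition Fd (a : R) (z : C) : C := (Qf a z z / ((1 - z * z) * (1 - z * z)))%C.

Lemma F_deriv a z : cm z < 1 -> has_cderiv (F_alpha a) z (Fd a z).
Proof.
  intros Hz.
  set (rho := (1 + cm z) / 2).
  set (A := (1 - 2 * RtoC a * z + z * z)%C).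
  set (B := (- RtoC a + 2 * z - RtoC a * z * z)%C).
  set (m := (1 - rho ^ 2) * (cm (1 - z * z)%C * cm (1 - z * z)%C)).
  assert (Hz0 := Cmod_ge_0 z).
  assert (Hnz := one_minus_sq_ne z Hz).
  assert (Hm : 0 < m).
  { unfold m. apply Rmult_lt_0_compat. unfold rho; nra.
    apply Rmult_lt_0_compat; apply Cmod_gt_0; auto. }
  apply has_cderiv_fact with
    (D := fun w => (Qf a w z / ((1 - w * w) * (1 - z * z)))%C)
    (r := (1 - cm z) / 2) (K := (2 * cm A + cm B) / m).
  - lra.
  - apply Rdiv_le_0_compat; auto. assert (H1 := Cmod_ge_0 A); assert (H2 := Cmod_ge_0 B); lra.
  - intros w Hw. rewrite F_diff, Cmult_comm; auto.
    apply one_minus_sq_ne. assert (H := Cmod_triangle (w - z)%C z).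
    replace (w - z + z)%C with w in H by ring. lra.
  - intros w Hw.
    assert (Hwr : cm w <= rho).
    { assert (H := Cmod_triangle (w - z)%C z).
      replace (w - z + z)%C with w in H by ring. unfold rho; lra. }
    assert (Hw1 : cm w < 1) by (unfold rho in Hwr; lra).
    assert (Hnw := one_minus_sq_ne w Hw1).
    assert (Hid : (Qf a w z / ((1 - w * w) * (1 - z * z)) - Fd a z =
       (w - z) * ((A * w + B) / ((1 - w * w) * ((1 - z * z) * (1 - z * z)))))%C).
    { unfold Fd, Qf, A, B. field. auto. }
    rewrite Hid, Cmod_mult, Cmod_div, !Cmod_mult.
    2:{ repeat apply Cmult_neq_0; auto. }
    assert (HP : cm (A * w + B)%C <= 2 * cm A + cm B).
    { eapply Rle_trans. apply Cmod_triangle. rewrite Cmod_mult.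
      assert (cm w <= 2) by lra. assert (H1 := Cmod_ge_0 A). nra. }
    assert (Hden : m <= cm (1 - w * w)%C * (cm (1 - z * z)%C * cm (1 - z * z)%C)).
    { unfold m. apply Rmult_le_compat_r.
      apply Rmult_le_pos; apply Cmod_ge_0.
      eapply Rle_trans; [|apply one_minus_sq_bound]. 
      assert (H0 := Cmod_ge_0 w). nra. }
    rewrite Rmult_comm. apply Rmult_le_compat_r. apply Cmod_ge_0.
    unfold Rdiv. apply Rmult_le_compat; auto.
    apply Cmod_ge_0. left; apply Rinv_0_lt_compat.
    apply Rlt_le_trans with m; auto.
    apply Rinv_le_contravar; auto.
Qed.

Definition nsq (u : C) : R := fst u ^ 2 + snd u ^ 2.

Lemma cm_nsq u : cm u = sqrt (nsq u).
Proof. reflexivity. Qed.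

Lemma nsq_ge0 u : 0 <= nsq u.
Proof. unfold nsq; nra. Qed.

Lemma cm_le_nsq u v : nsq u <= nsq v -> cm u <= cm v.
Proof. intros. rewrite !cm_nsq. apply sqrt_le_1_alt; auto. Qed.

Lemma cm_lt_nsq u v : nsq u < nsq v -> cm u < cm v.
Proof. intros. rewrite !cm_nsq. apply sqrt_lt_1_alt. split; auto. apply nsq_ge0. Qed.

Lemma cm_sub_bound (u v : C) : cm (u - v)%C <= cm u + cm v.
Proof. eapply Rle_trans. apply Cmod_triangle. rewrite Cmod_opp. lra. Qed.

Lemma cm_RtoC (a : R) : cm (RtoC a) = Rabs a.
Proof. apply Cmod_R. Qed.

Lemma nsq_identity (a : R) (z : C) :
  nsq (1 - RtoC a * z)%C - nsq (z - RtoC a)%C = (1 - a ^ 2) * (1 - nsq z).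
Proof. destruct z as [x y]. unfold nsq; simpl. ring. Qed.

Lemma E_iff z : E z <-> cm z < 1.
Proof. reflexivity. Qed.

Lemma Qf_alt a z w : Qf a z w = ((1 - RtoC a * w) + z * (w - RtoC a))%C.
Proof. unfold Qf. ring. Qed.

Lemma Qf_lower a z w : cm (1 - RtoC a * w)%C - cm z * cm (w - RtoC a)%C <= cm (Qf a z w).
Proof.
  rewrite Qf_alt. assert (H := Cmod_sub_rev (1 - RtoC a * w)%C (- (z * (w - RtoC a)))%C).
  rewrite Cmod_opp, Cmod_mult in H.
  replace (1 - RtoC a * w - - (z * (w - RtoC a)))%C with (1 - RtoC a * w + z * (w - RtoC a))%C in H by ring.
  exact H.
Qed.

Lemma Qf_ne a z w : -1 <= a <= 1 -> cm z < 1 -> cm w < 1 -> Qf a z w <> 0%C.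
Proof.
  intros Ha Hz Hw HQ.
  assert (H := Qf_lower a z w). rewrite HQ, Cmod_0 in H.
  assert (Hle : cm (w - RtoC a)%C <= cm (1 - RtoC a * w)%C).
  { apply cm_le_nsq. assert (H1 := nsq_identity a w).
    assert (nsq w < 1). { apply Cmod_lt1_iff in Hw. unfold nsq. exact Hw. }
    assert (0 <= 1 - a^2) by nra. assert (0 <= (1 - a^2) * (1 - nsq w)) by (apply Rmult_le_pos; lra).
    lra. }
  assert (Hpos : 0 < cm (1 - RtoC a * w)%C).
  { assert (H1 := Cmod_sub_rev 1 (RtoC a * w)%C). rewrite Cmod_1, Cmod_mult, cm_RtoC in H1.
    assert (Rabs a <= 1) by (apply Rabs_le; lra). assert (H2 := Cmod_ge_0 w). nra. }
  assert (Hz0 := Cmod_ge_0 z). assert (H3 := Cmod_ge_0 (w - RtoC a)%C).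
  destruct (Req_dec (cm (w - RtoC a)%C) 0) as [H0|H0].
  - rewrite H0 in H. lra.
  - assert (0 < cm (w - RtoC a)%C) by lra.
    assert (cm z * cm (w - RtoC a)%C < cm (w - RtoC a)%C) by nra. lra.
Qed.

Theorem F_univalent a : -1 <= a <= 1 -> forall z w, cm z < 1 -> cm w < 1 ->
  F_alpha a z = F_alpha a w -> z = w.
Proof.
  intros Ha z w Hz Hw Heq.
  assert (H := F_diff a z w (one_minus_sq_ne z Hz) (one_minus_sq_ne w Hw)).
  rewrite Heq in H. replace (F_alpha a w - F_alpha a w)%C with (0:C) in H by ring.
  destruct (Ceq_dec z w) as [e|n]; auto. exfalso.
  apply (Qf_ne a z w Ha Hz Hw).
  assert (Hd : ((1 - z * z) * (1 - w * w))%C <> 0%C)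
    by (apply Cmult_neq_0; apply one_minus_sq_ne; auto).
  assert (Hzw : (z - w)%C <> 0%C).
  { intro e; apply n. transitivity ((z - w) + w)%C; [ring| rewrite e; ring]. }
  assert (H2 : (Qf a z w / ((1 - z * z) * (1 - w * w)))%C = 0%C).
  { apply (f_equal (fun t => t / (z - w))%C) in H.
    replace (0 / (z - w))%C with (0:C) in H by (field; auto).
    rewrite H. field. repeat split; try (apply one_minus_sq_ne; assumption); auto. }
  apply (f_equal (fun t => t * ((1 - z * z) * (1 - w * w)))%C) in H2.
  rewrite Cmult_0_l in H2. rewrite <- H2. field. repeat split; try (apply one_minus_sq_ne; assumption); auto.
Qed.

Lemma Re_div (p q : C) : fst (p / q)%C = (fst p * fst q + snd p * snd q) / nsq q.
Proof. destruct p as [p1 p2], q as [q1 q2]. unfold nsq; simpl. unfold Rdiv. ring. Qed.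

Lemma Im_div (p q : C) : snd (p / q)%C = (snd p * fst q - fst p * snd q) / nsq q.
Proof. destruct p as [p1 p2], q as [q1 q2]. unfold nsq; simpl. unfold Rdiv. ring. Qed.

Lemma nsq_pos (u : C) : u <> (0:C) -> 0 < nsq u.
Proof.
  intro H. apply Cmod_gt_0 in H. rewrite cm_nsq in H.
  destruct (Rle_or_lt (nsq u) 0) as [h|h]; auto.
  rewrite sqrt_neg_0 in H; auto. lra.
Qed.

Lemma one_plus_ne (z : C) : cm z < 1 -> (1 + z)%C <> (0:C).
Proof.
  intros Hz e. assert (z = (- 1)%C). { transitivity ((1 + z) - 1)%C; [ring| rewrite e; ring]. }
  rewrite H, Cmod_R, Rabs_left in Hz; lra.
Qed.

Lemma one_minus_ne (z : C) : cm z < 1 -> (1 - z)%C <> (0:C).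
Proof.
  intros Hz e. assert (z = 1%C). { transitivity (1 - (1 - z))%C; [ring| rewrite e; ring]. }
  rewrite H, Cmod_1 in Hz. lra.
Qed.

Lemma part1 a z : -1 <= a <= 1 -> cm z < 1 -> 0 < fst ((1 - z * z) * Fd a z)%C.
Proof.
  intros Ha Hz.
  assert (Hn := one_minus_sq_ne z Hz).
  replace ((1 - z * z) * Fd a z)%C with (Qf a z z / (1 - z * z))%C
    by (unfold Fd; field; auto).
  rewrite Re_div. apply Rdiv_lt_0_compat; [|apply nsq_pos; auto].
  apply Cmod_lt1_iff in Hz.
  destruct z as [x y]. unfold Qf; simpl in *.
  assert (E1 : 0 < 1 - (x^2 + y^2)) by lra.
  assert (E2 : 0 < 1 + x^2 + y^2 - 2 * a * x).
  { assert (x^2 < 1) by nra. assert (-1 < x < 1) by nra.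
    destruct (Rle_or_lt 0 x).
    - assert (a * x <= x) by nra. assert (0 < (1 - x)^2) by (apply pow_lt; lra). nra.
    - assert (a * x <= - x) by nra. assert (0 < (1 + x)^2) by (apply pow_lt; lra). nra. }
  assert (Heq : forall A B, A = B -> 0 < B -> 0 < A) by (intros; subst; auto).
  eapply Heq; [| apply (Rmult_lt_0_compat _ _ E1 E2)]. ring.
Qed.

Lemma cm_one_plus_le (z : C) : cm z < 1 -> cm (1 + z)%C <= 2.
Proof. intros. eapply Rle_trans. apply Cmod_triangle. rewrite Cmod_1. lra. Qed.

Lemma cm_one_minus_le (z : C) : cm z < 1 -> cm (1 - z)%C <= 2.
Proof. intros. eapply Rle_trans. apply cm_sub_bound. rewrite Cmod_1. lra. Qed.

Lemma cm_one_minus_sq_le (z : C) : cm z < 1 -> cm (1 - z * z)%C <= 2.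
Proof.
  intros. eapply Rle_trans. apply cm_sub_bound. rewrite Cmod_1, Cmod_mult.
  assert (H0 := Cmod_ge_0 z). nra.
Qed.

Lemma F_invlip a zt : -1 <= a <= 1 -> cm zt < 1 ->
  exists K, 0 < K /\ forall zs, cm zs < 1 ->
    cm (zs - zt)%C <= K * cm (F_alpha a zs - F_alpha a zt)%C.
Proof.
  intros Ha Ht.
  assert (Hnt := one_minus_sq_ne zt Ht).
  destruct (Req_dec a 1) as [H1|H1].
  { subst a. exists 4. split; [lra|]. intros zs Hs.
    assert (Hns := one_minus_sq_ne zs Hs).
    assert (Hps := one_plus_ne zs Hs). assert (Hpt := one_plus_ne zt Ht).
    replace (zs - zt)%C with ((F_alpha 1 zs - F_alpha 1 zt) * ((1 + zs) * (1 + zt)))%C.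
    2:{ rewrite !F_eq. change (RtoC 1) with (1:C). field. repeat split; auto. }
    rewrite !Cmod_mult.
    assert (A1 := cm_one_plus_le zs Hs). assert (A2 := cm_one_plus_le zt Ht).
    assert (B0 := Cmod_ge_0 (F_alpha 1 zs - F_alpha 1 zt)%C).
    assert (B1 := Cmod_ge_0 (1 + zs)%C). assert (B2 := Cmod_ge_0 (1 + zt)%C).
    assert (cm (1 + zs)%C * cm (1 + zt)%C <= 4) by nra. nra. }
  destruct (Req_dec a (-1)) as [H2|H2].
  { subst a. exists 4. split; [lra|]. intros zs Hs.
    assert (Hns := one_minus_sq_ne zs Hs).
    assert (Hps := one_minus_ne zs Hs). assert (Hpt := one_minus_ne zt Ht).
    replace (zs - zt)%C with ((F_alpha (-1) zs - F_alpha (-1) zt) * ((1 - zs) * (1 - zt)))%C.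
    2:{ rewrite !F_eq. replace (RtoC (-1)) with (- (1:C))%C by (apply injective_projections; simpl; ring). field. repeat split; auto. }
    rewrite !Cmod_mult.
    assert (A1 := cm_one_minus_le zs Hs). assert (A2 := cm_one_minus_le zt Ht).
    assert (B0 := Cmod_ge_0 (F_alpha (-1) zs - F_alpha (-1) zt)%C).
    assert (B1 := Cmod_ge_0 (1 - zs)%C). assert (B2 := Cmod_ge_0 (1 - zt)%C).
    assert (cm (1 - zs)%C * cm (1 - zt)%C <= 4) by nra. nra. }
  set (m := cm (1 - RtoC a * zt)%C - cm (zt - RtoC a)%C).
  assert (Hm : 0 < m).
  { unfold m. assert (cm (zt - RtoC a)%C < cm (1 - RtoC a * zt)%C); [|lra].
    apply cm_lt_nsq. assert (H := nsq_identity a zt).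
    assert (nsq zt < 1) by (apply Cmod_lt1_iff in Ht; exact Ht).
    assert (0 < 1 - a^2) by nra. assert (0 < (1 - a^2) * (1 - nsq zt)) by (apply Rmult_lt_0_compat; lra).
    lra. }
  exists (4 / m). split. apply Rdiv_lt_0_compat; lra.
  intros zs Hs.
  assert (Hns := one_minus_sq_ne zs Hs).
  assert (HQ := Qf_ne a zs zt Ha Hs Ht).
  assert (HQm : m <= cm (Qf a zs zt)).
  { eapply Rle_trans; [|apply Qf_lower]. unfold m.
    assert (H0 := Cmod_ge_0 (zt - RtoC a)%C). assert (H3 := Cmod_ge_0 zs). nra. }
  replace (zs - zt)%C with ((F_alpha a zs - F_alpha a zt) * (((1 - zs * zs) * (1 - zt * zt)) / Qf a zs zt))%C.
  2:{ rewrite F_diff; auto. field. auto. }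
  rewrite Cmod_mult, Cmod_div, Cmod_mult; auto.
  assert (A1 := cm_one_minus_sq_le zs Hs). assert (A2 := cm_one_minus_sq_le zt Ht).
  assert (B0 := Cmod_ge_0 (F_alpha a zs - F_alpha a zt)%C).
  assert (B1 := Cmod_ge_0 (1 - zs * zs)%C). assert (B2 := Cmod_ge_0 (1 - zt * zt)%C).
  rewrite Rmult_comm. apply Rmult_le_compat_r; auto.
  unfold Rdiv. apply Rmult_le_compat; try nra.
  apply Rlt_le, Rinv_0_lt_compat; lra.
  apply Rinv_le_contravar; lra.
Qed.

Lemma Csqrt_ex (Dd : C) : exists S : C, (S * S)%C = Dd.
Proof.
  destruct Dd as [p q].
  set (n := sqrt (p ^ 2 + q ^ 2)).
  assert (Hn2 : n * n = p ^ 2 + q ^ 2) by (apply sqrt_sqrt; nra).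
  assert (Hn0 : 0 <= n) by apply sqrt_pos.
  assert (Hnp : Rabs p <= n).
  { unfold n. rewrite <- sqrt_Rsqr_abs. apply sqrt_le_1_alt. unfold Rsqr; nra. }
  assert (p <= Rabs p) by apply Rle_abs.
  assert (-p <= Rabs p) by (rewrite <- Rabs_Ropp; apply Rle_abs).
  assert (Hp1 : 0 <= (n + p) / 2) by lra.
  assert (Hp2 : 0 <= (n - p) / 2) by lra.
  set (s1 := sqrt ((n + p) / 2)). set (s2 := sqrt ((n - p) / 2)).
  assert (E1 : s1 * s1 = (n + p) / 2) by (apply sqrt_sqrt; auto).
  assert (E2 : s2 * s2 = (n - p) / 2) by (apply sqrt_sqrt; auto).
  assert (E3 : s1 * s2 = Rabs q / 2).
  { unfold s1, s2. rewrite <- sqrt_mult by auto.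
    replace ((n + p) / 2 * ((n - p) / 2)) with ((Rabs q / 2) * (Rabs q / 2)).
    apply sqrt_square. assert (0 <= Rabs q) by apply Rabs_pos. lra.
    replace ((n + p) / 2 * ((n - p) / 2)) with ((n * n - p ^ 2) / 4) by field.
    rewrite Hn2. replace (Rabs q / 2 * (Rabs q / 2)) with (Rabs q * Rabs q / 4) by field.
    rewrite <- (Rabs_mult q q). rewrite Rabs_right by nra. field. }
  destruct (Rle_or_lt 0 q) as [Hq|Hq].
  - exists (s1, s2). apply injective_projections; simpl.
    + nra.
    + rewrite Rabs_right in E3 by lra. nra.
  - exists (s1, - s2). apply injective_projections; simpl.
    + nra.
    + rewrite Rabs_left in E3 by lra. nra.
Qed.

Definition Om (a : R) (w : C) : Prop :=
  (a = 1 /\ fst w < 1/2) \/ (a = -1 /\ -1/2 < fst w) \/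
  (-1 < a < 1 /\ (fst w <> a/2 \/ 4 * snd w ^ 2 < 1 - a ^ 2)).

Lemma Om_convex a (p q : C) (t : R) : Om a p -> Om a q -> fst p = fst q -> 0 <= t <= 1 ->
  Om a (fst p, snd p + t * (snd q - snd p)).
Proof.
  intros Hp Hq Hf Ht. unfold Om in *; simpl.
  destruct Hp as [[? ?]|[[? ?]|[? Hp]]]; [left; auto| right; left; auto|].
  right; right. split; auto.
  destruct Hp as [Hp|Hp]; [left; auto|].
  destruct Hq as [[? ?]|[[? ?]|[? Hq]]]; try lra.
  destruct Hq as [Hq|Hq]; [left; congruence|].
  right.
  assert (J : (1 - t) * snd p ^ 2 + t * snd q ^ 2 - (snd p + t * (snd q - snd p)) ^ 2
     = t * (1 - t) * (snd p - snd q) ^ 2) by ring.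
  assert (0 <= t * (1 - t) * (snd p - snd q) ^ 2).
  { apply Rmult_le_pos. apply Rmult_le_pos; lra. apply pow2_ge_0. }
  assert ((1-t)*(4*snd p^2) <= (1-t)*(1-a^2)) by (apply Rmult_le_compat_l; lra).
  assert (t*(4*snd q^2) <= t*(1-a^2)) by (apply Rmult_le_compat_l; lra).
  destruct (Rle_or_lt t (1/2)).
  - assert ((1-t)*(4*snd p^2) < (1-t)*(1-a^2)) by (apply Rmult_lt_compat_l; lra). lra.
  - assert (t*(4*snd q^2) < t*(1-a^2)) by (apply Rmult_lt_compat_l; lra). lra.
Qed.

Lemma F_u a z : cm z < 1 ->
  F_alpha a z = (RtoC a / 2 + ((1 - RtoC a) * ((1 + z) / (1 - z)) - (1 + RtoC a) / ((1 + z) / (1 - z))) / 4)%C.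
Proof.
  intros Hz. assert (H1 := one_plus_ne z Hz). assert (H2 := one_minus_ne z Hz).
  assert (H3 := one_minus_sq_ne z Hz).
  match goal with |- _ = ?r => change (@eq C (F_alpha a z) r) end. rewrite F_eq. field. repeat split; auto.
Qed.

Lemma G_parts a X Y : X ^ 2 + Y ^ 2 <> 0 ->
  let G := (RtoC a / 2 + ((1 - RtoC a) * (X, Y) - (1 + RtoC a) / (X, Y)) / 4)%C in
  fst G = a / 2 + X / 4 * ((1 - a) - (1 + a) / (X ^ 2 + Y ^ 2)) /\
  snd G = Y / 4 * ((1 - a) + (1 + a) / (X ^ 2 + Y ^ 2)).
Proof. intros HN G. unfold G; simpl. split; field; (split; [nra|]; auto) || nra. Qed.

Lemma u_re_pos z : cm z < 1 -> 0 < fst ((1 + z) / (1 - z))%C.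
Proof.
  intros Hz. rewrite Re_div. apply Rdiv_lt_0_compat; [| apply nsq_pos, one_minus_ne; auto].
  apply Cmod_lt1_iff in Hz. destruct z as [x y]; simpl in *. nra.
Qed.

Lemma image_in_Om a z : -1 <= a <= 1 -> cm z < 1 -> Om a (F_alpha a z).
Proof.
  intros Ha Hz. rewrite (F_u a z Hz).
  assert (HX := u_re_pos z Hz).
  destruct ((1 + z) / (1 - z))%C as [X Y] eqn:Hu. simpl in HX.
  assert (HN : X ^ 2 + Y ^ 2 <> 0) by nra.
  assert (HN' : 0 < X ^ 2 + Y ^ 2) by nra.
  destruct (G_parts a X Y HN) as [G1 G2].
  unfold Om. rewrite G1, G2.
  destruct (Req_dec a 1) as [->|H1].
  { left. split; auto. assert (0 < X / 4 * (2 / (X^2+Y^2))).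
    { apply Rmult_lt_0_compat. lra. apply Rdiv_lt_0_compat; lra. }
    replace (1 - 1) with 0 by ring. replace (1 + 1) with 2 by ring. lra. }
  destruct (Req_dec a (-1)) as [->|H2].
  { right; left. split; auto. replace (1 - -1) with 2 by ring. replace (1 + -1) with 0 by ring.
    unfold Rdiv. rewrite Rmult_0_l. lra. }
  right; right. split; [lra|].
  destruct (Req_dec (a / 2 + X / 4 * (1 - a - (1 + a) / (X ^ 2 + Y ^ 2))) (a / 2)) as [H|H];
    [right|left; auto].
  assert (Hk : (1 - a) * (X ^ 2 + Y ^ 2) = 1 + a).
  { assert (X / 4 * (1 - a - (1 + a) / (X ^ 2 + Y ^ 2)) = 0) by lra.
    apply Rmult_integral in H0. destruct H0 as [H0|H0]; [lra|].
    apply (f_equal (fun t => t * (X^2+Y^2))) in H0.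
    replace ((1 - a - (1 + a) / (X ^ 2 + Y ^ 2)) * (X ^ 2 + Y ^ 2)) with
      ((1-a) * (X^2+Y^2) - (1+a)) in H0 by (field; auto). lra. }
  assert (Hs : (1 + a) / (X ^ 2 + Y ^ 2) = 1 - a).
  { apply (Rmult_eq_reg_r (X^2+Y^2)); [|lra]. field_simplify; lra. }
  rewrite Hs.
  assert (Y ^ 2 < X ^ 2 + Y ^ 2) by nra.
  assert (0 < 1 - a) by lra.
  replace (4 * (Y / 4 * (1 - a + (1 - a))) ^ 2) with (Y ^ 2 * (1 - a) ^ 2) by field.
  assert (Y ^ 2 * (1 - a) ^ 2 < (X ^ 2 + Y ^ 2) * (1 - a) ^ 2).
  { apply Rmult_lt_compat_r; auto. nra. }
  nra.
Qed.

Ltac toC := match goal with |- ?l = ?r => change (@eq C l r) end.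

Lemma F_one_eq z : cm z < 1 -> (F_alpha 1 z = z / (1 + z) :> C)%C.
Proof.
  intros Hz. assert (H1 := one_plus_ne z Hz). assert (H2 := one_minus_ne z Hz).
  assert (H3 := one_minus_sq_ne z Hz).
  rewrite F_eq. change (RtoC 1) with (1:C). field. repeat split; auto.
Qed.

Lemma F_mone_eq z : cm z < 1 -> (F_alpha (-1) z = z / (1 - z) :> C)%C.
Proof.
  intros Hz. assert (H1 := one_plus_ne z Hz). assert (H2 := one_minus_ne z Hz).
  assert (H3 := one_minus_sq_ne z Hz).
  rewrite F_eq. replace (RtoC (-1)) with (- (1:C))%C by (apply injective_projections; simpl; ring).
  field. repeat split; auto.
Qed.

Lemma Ceq_sub0 (x y : C) : (x - y = 0)%C -> x = y.
Proof. intro H. transitivity ((x - y) + y)%C. ring. rewrite H. ring. Qed.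

Lemma Cne_fst (u : C) : fst u <> 0 -> u <> (0:C).
Proof. intros H e. rewrite e in H. simpl in H. lra. Qed.

Lemma Om_in_image a w : -1 <= a <= 1 -> Om a w -> exists z, cm z < 1 /\ F_alpha a z = w.
Proof.
  intros Ha Hw. destruct Hw as [[-> Hw]|[[-> Hw]|[Ha' Hw]]].
  - assert (Hn : (1 - w)%C <> (0:C)) by (apply Cne_fst; simpl; lra).
    assert (Hlt : cm w < cm (1 - w)%C) by (apply cm_lt_nsq; destruct w as [p q]; unfold nsq; simpl in *; nra).
    assert (Hz : cm (w / (1 - w))%C < 1).
    { rewrite Cmod_div by auto. assert (0 < cm (1 - w)%C) by (apply Cmod_gt_0; auto).
      apply (Rmult_lt_reg_r (cm (1 - w)%C)); auto. field_simplify; lra. }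
    exists (w / (1 - w))%C. split; auto.
    toC. rewrite F_one_eq by auto. assert (H1 := one_plus_ne _ Hz).
    field. split; auto. replace (1 - w + w)%C with (1:C) by ring. apply Cne_fst; simpl; lra.
  - assert (Hn : (1 + w)%C <> (0:C)) by (apply Cne_fst; simpl; lra).
    assert (Hlt : cm w < cm (1 + w)%C) by (apply cm_lt_nsq; destruct w as [p q]; unfold nsq; simpl in *; nra).
    assert (Hz : cm (w / (1 + w))%C < 1).
    { rewrite Cmod_div by auto. assert (0 < cm (1 + w)%C) by (apply Cmod_gt_0; auto).
      apply (Rmult_lt_reg_r (cm (1 + w)%C)); auto. field_simplify; lra. }
    exists (w / (1 + w))%C. split; auto.
    toC. rewrite F_mone_eq by auto. assert (H1 := one_minus_ne _ Hz).
    field. split; auto. replace (1 + w - w)%C with (1:C) by ring. apply Cne_fst; simpl; lra.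
  - set (Dd := (1 + 4 * w * (w - RtoC a))%C).
    destruct (Csqrt_ex Dd) as [S0 HS0].
    assert (HS : exists S, (S * S)%C = Dd /\ (1 + S)%C <> (0:C)).
    { destruct (Ceq_dec (1 + S0)%C 0) as [e|n].
      - exists (- S0)%C. split. rewrite <- HS0. ring.
        intro e2. assert (S0 = (-1)%C) by (transitivity ((1 + S0) - 1)%C; [ring|rewrite e; ring]).
        rewrite H in e2. apply Cne_fst in e2; auto. simpl. lra.
      - exists S0. auto. }
    destruct HS as [S [HS HS1]].
    set (z0 := (2 * w / (1 + S))%C).
    assert (R0 : (z0 * (1 - RtoC a * z0) = w * (1 - z0 * z0))%C).
    { assert (K : (z0 * (1 - RtoC a * z0) - w * (1 - z0 * z0) = w * (Dd - S * S) / ((1 + S) * (1 + S)))%C).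
      { unfold z0, Dd. field. auto. }
      rewrite HS in K. replace (w * (Dd - Dd) / ((1 + S) * (1 + S)))%C with (0:C) in K by (field; auto).
      transitivity ((z0 * (1 - RtoC a * z0) - w * (1 - z0 * z0)) + w * (1 - z0 * z0))%C; [ring|].
      rewrite K. ring. }
    clearbody z0.
    assert (Froot : forall u, (1 - u * u)%C <> (0:C) -> (u * (1 - RtoC a * u) = w * (1 - u * u))%C
        -> F_alpha a u = w).
    { intros u Hu Hr. toC. rewrite F_eq. rewrite Hr. field. auto. }
    destruct (total_order_T (nsq z0) 1) as [[Hlt|Heq]|Hgt].
    + exists z0. assert (Hz : cm z0 < 1) by (apply Cmod_lt1_iff; exact Hlt).
      split; auto. apply Froot; auto. apply one_minus_sq_ne; auto.
    + exfalso.
      assert (Hzz : (z0 * Complex.Cconj z0)%C = (1:C)).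
      { destruct z0 as [x y]. unfold nsq in Heq; simpl in Heq.
        apply injective_projections; simpl; nra. }
      assert (K : ((z0 * Complex.Cconj z0) - RtoC a * z0 * (z0 * Complex.Cconj z0)
                   - (w * Complex.Cconj z0 - w * z0 * (z0 * Complex.Cconj z0)) = 0)%C).
      { transitivity ((z0 * (1 - RtoC a * z0) - w * (1 - z0 * z0)) * Complex.Cconj z0)%C; [ring|].
        rewrite R0. ring. }
      rewrite Hzz in K.
      destruct z0 as [x y], w as [p q]. unfold nsq in Heq; simpl in Heq.
      assert (K1 := f_equal fst K). assert (K2 := f_equal snd K). simpl in K1, K2.
      assert (h1 : 1 - a * x - 2 * q * y = 0) by nra.
      assert (h2 : y * (2 * p - a) = 0) by nra.
      simpl in Hw.
      destruct (Req_dec y 0) as [Hy|Hy].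
      * subst y. assert (x ^ 2 = 1) by nra. assert (a * x = 1) by nra.
        assert ((a * x) ^ 2 = 1) by (rewrite H0; ring). nra.
      * assert (Hp : p = a / 2).
        { apply Rmult_integral in h2. destruct h2 as [h|h]; [contradiction|lra]. }
        assert (Hy2 : 0 < y ^ 2) by (apply pow2_gt_0 in Hy; auto; nra).
        assert (Hid : (1 - a * x) ^ 2 - (1 - a ^ 2) * y ^ 2 = (x - a) ^ 2) by nra.
        assert (4 * q ^ 2 * y ^ 2 = (1 - a * x) ^ 2) by nra.
        assert (Hge : (1 - a ^ 2) * y ^ 2 <= 4 * q ^ 2 * y ^ 2) by (assert (0 <= (x - a) ^ 2) by apply pow2_ge_0; lra).
        assert (1 - a ^ 2 <= 4 * q ^ 2).
        { apply (Rmult_le_reg_r (y ^ 2)); auto. }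
        destruct Hw as [Hw|Hw]; lra.
    + assert (Hz0a : (z0 - RtoC a)%C <> (0:C)).
      { intro e. assert (z0 = RtoC a) by (transitivity ((z0 - RtoC a) + RtoC a)%C; [ring|rewrite e; ring]).
        rewrite H in Hgt. unfold nsq in Hgt; simpl in Hgt. nra. }
      assert (Hz0n : (1 - z0 * z0)%C <> (0:C)).
      { intro e. assert (E1 : (z0 * z0)%C = (1:C)) by (transitivity (1 - (1 - z0 * z0))%C; [ring|rewrite e; ring]).
        apply (f_equal Complex.Cmod) in E1. rewrite Cmod_mult, Cmod_1 in E1.
        assert (cm z0 = 1) by (assert (H0 := Cmod_ge_0 z0); nra).
        rewrite cm_nsq in H. assert (nsq z0 = 1).
        { rewrite <- (sqrt_sqrt (nsq z0)) by apply nsq_ge0. rewrite H. ring. } lra. }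
      set (z1 := ((RtoC a * z0 - 1) / (z0 - RtoC a))%C).
      assert (Hz1 : cm z1 < 1).
      { unfold z1. rewrite Cmod_div by auto.
        assert (0 < cm (z0 - RtoC a)%C) by (apply Cmod_gt_0; auto).
        assert (cm (RtoC a * z0 - 1)%C < cm (z0 - RtoC a)%C).
        { apply cm_lt_nsq. assert (H1 := nsq_identity a z0).
          assert (nsq (RtoC a * z0 - 1)%C = nsq (1 - RtoC a * z0)%C)
            by (destruct z0; unfold nsq; simpl; ring).
          assert (0 < 1 - a ^ 2) by nra.
          assert ((1 - a^2) * (1 - nsq z0) < 0).
          { assert (1 - nsq z0 < 0) by lra. nra. } lra. }
        apply (Rmult_lt_reg_r (cm (z0 - RtoC a)%C)); auto. field_simplify; lra. }
      exists z1. split; auto.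
      assert (Fz0 : F_alpha a z0 = w) by (apply Froot; auto).
      rewrite <- Fz0. toC.
      assert (Hd := F_diff a z1 z0 (one_minus_sq_ne z1 Hz1) Hz0n).
      assert (HQ : Qf a z1 z0 = (0:C)) by (unfold Qf, z1; field; auto).
      rewrite HQ in Hd.
      apply Ceq_sub0. rewrite Hd. field. split; auto. apply one_minus_sq_ne; auto.
Qed.


Lemma cd_unfold f z l : has_cderiv f z l -> forall eps, 0 < eps -> exists delta, 0 < delta /\
  forall w, 0 < cm (w - z)%C < delta -> cm (f w - f z - l * (w - z))%C <= eps * cm (w - z)%C.
Proof. intros H. exact H. Qed.

Lemma cd_fold (f : C -> C) z l : (forall eps, 0 < eps -> exists delta, 0 < delta /\
  forall w, 0 < cm (w - z)%C < delta -> cm (f w - f z - l * (w - z))%C <= eps * cm (w - z)%C) ->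
  has_cderiv f z l.
Proof. intros H. exact H. Qed.

Lemma cd_add f g z l1 l2 : has_cderiv f z l1 -> has_cderiv g z l2 ->
  has_cderiv (fun w => (f w + g w)%C) z (l1 + l2)%C.
Proof.
  intros Hf Hg. apply cd_fold. intros eps He.
  destruct (cd_unfold _ _ _ Hf (eps/2)) as [d1 [Hd1 H1]]; [lra|].
  destruct (cd_unfold _ _ _ Hg (eps/2)) as [d2 [Hd2 H2]]; [lra|].
  exists (Rmin d1 d2). split. apply Rmin_pos; auto.
  intros w Hw.
  assert (A1 : 0 < cm (w - z)%C < d1) by (split; [lra|eapply Rlt_le_trans;[apply Hw|apply Rmin_l]]).
  assert (A2 : 0 < cm (w - z)%C < d2) by (split; [lra|eapply Rlt_le_trans;[apply Hw|apply Rmin_r]]).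
  replace (f w + g w - (f z + g z) - (l1 + l2) * (w - z))%C with
    ((f w - f z - l1 * (w - z)) + (g w - g z - l2 * (w - z)))%C by ring.
  eapply Rle_trans. apply Cmod_triangle.
  assert (B1 := H1 w A1). assert (B2 := H2 w A2). lra.
Qed.

Lemma cd_sub f g z l1 l2 : has_cderiv f z l1 -> has_cderiv g z l2 ->
  has_cderiv (fun w => (f w - g w)%C) z (l1 - l2)%C.
Proof.
  intros Hf Hg. apply cd_fold. intros eps He.
  destruct (cd_unfold _ _ _ Hf (eps/2)) as [d1 [Hd1 H1]]; [lra|].
  destruct (cd_unfold _ _ _ Hg (eps/2)) as [d2 [Hd2 H2]]; [lra|].
  exists (Rmin d1 d2). split. apply Rmin_pos; auto.
  intros w Hw.
  assert (A1 : 0 < cm (w - z)%C < d1) by (split; [lra|eapply Rlt_le_trans;[apply Hw|apply Rmin_l]]).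
  assert (A2 : 0 < cm (w - z)%C < d2) by (split; [lra|eapply Rlt_le_trans;[apply Hw|apply Rmin_r]]).
  replace (f w - g w - (f z - g z) - (l1 - l2) * (w - z))%C with
    ((f w - f z - l1 * (w - z)) - (g w - g z - l2 * (w - z)))%C by ring.
  eapply Rle_trans. apply cm_sub_bound.
  assert (B1 := H1 w A1). assert (B2 := H2 w A2). lra.
Qed.

Lemma cd_local (f f2 : C -> C) z l r : 0 < r -> has_cderiv f z l ->
  (forall w, cm (w - z)%C < r -> f2 w = f w) -> has_cderiv f2 z l.
Proof.
  intros Hr Hf Hloc. apply cd_fold. intros eps He.
  destruct (cd_unfold _ _ _ Hf eps He) as [d [Hd H]].
  exists (Rmin d r). split. apply Rmin_pos; auto.
  intros w Hw.
  assert (A1 : 0 < cm (w - z)%C < d) by (split; [lra|eapply Rlt_le_trans;[apply Hw|apply Rmin_l]]).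
  assert (A2 : cm (w - z)%C < r) by (eapply Rlt_le_trans;[apply Hw|apply Rmin_r]).
  rewrite (Hloc w A2), (Hloc z). apply H; auto.
  replace (z - z)%C with (0:C) by ring. rewrite Cmod_0. auto.
Qed.

Lemma cd_cont f z l : has_cderiv f z l -> forall eps, 0 < eps -> exists delta, 0 < delta /\
  forall w, cm (w - z)%C < delta -> cm (f w - f z)%C <= eps.
Proof.
  intros Hf eps He.
  destruct (cd_unfold _ _ _ Hf 1) as [d [Hd H]]; [lra|].
  set (k := cm l + 1).
  assert (Hk : 0 < k) by (unfold k; assert (H0 := Cmod_ge_0 l); lra).
  exists (Rmin d (eps / k)). split. apply Rmin_pos; auto. apply Rdiv_lt_0_compat; auto.
  intros w Hw.
  destruct (Req_dec (cm (w - z)%C) 0) as [H0|H0].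
  - apply Cmod_eq_0 in H0. assert (w = z) by (apply Ceq_sub0; auto).
    subst. replace (f z - f z)%C with (0:C) by ring. rewrite Cmod_0. lra.
  - assert (A1 : 0 < cm (w - z)%C < d).
    { split. assert (H1 := Cmod_ge_0 (w - z)%C). lra. eapply Rlt_le_trans;[apply Hw|apply Rmin_l]. }
    assert (A2 : cm (w - z)%C < eps / k) by (eapply Rlt_le_trans;[apply Hw|apply Rmin_r]).
    assert (B := H w A1).
    replace (f w - f z)%C with ((f w - f z - l * (w - z)) + l * (w - z))%C by ring.
    eapply Rle_trans. apply Cmod_triangle. rewrite Cmod_mult.
    assert (cm (w - z)%C * k <= eps).
    { apply Rlt_le. apply (Rmult_lt_reg_r (/ k)). apply Rinv_0_lt_compat; auto.
      replace (cm (w - z)%C * k * / k) with (cm (w - z)%C) by (field; lra). exact A2. }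
    unfold k in *. nra.
Qed.

Lemma snd_le_cm (u : C) : Rabs (snd u) <= cm u.
Proof. eapply Rle_trans; [|apply Rmax_Cmod]. apply Rmax_r. Qed.

Lemma chain_im (Fm phi : C -> C) (gam : R -> C) (s c K0 rho : R) (L M : C) :
  has_cderiv Fm (gam s) L -> L <> (0:C) -> has_cderiv phi (gam s) M -> 0 <= K0 -> 0 < rho ->
  (forall s', cm (gam s' - gam s)%C <= K0 * Rabs (s' - s)) ->
  (forall s', Rabs (s' - s) < rho -> (Fm (gam s') - Fm (gam s))%C = (0, c * (s' - s))) ->
  forall eps, 0 < eps -> exists delta, 0 < delta /\ forall s', Rabs (s' - s) < delta ->
    Rabs (snd (phi (gam s')) - snd (phi (gam s)) - c * fst (M / L)%C * (s' - s)) <= eps * Rabs (s' - s).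
Proof.
  intros HF HL Hphi HK Hrho Hlip Hpath eps He.
  set (A := cm M / cm L).
  assert (HLp : 0 < cm L) by (apply Cmod_gt_0; auto).
  assert (HA : 0 <= A) by (unfold A; apply Rdiv_le_0_compat; [apply Cmod_ge_0|auto]).
  set (eta := eps / ((A + 1) * (K0 + 1))).
  assert (Heta : 0 < eta) by (unfold eta; apply Rdiv_lt_0_compat; auto; nra).
  destruct (cd_unfold _ _ _ HF eta Heta) as [d1 [Hd1 H1]].
  destruct (cd_unfold _ _ _ Hphi eta Heta) as [d2 [Hd2 H2]].
  set (dm := Rmin d1 d2).
  assert (Hdm : 0 < dm) by (apply Rmin_pos; auto).
  exists (Rmin rho (dm / (K0 + 1))). split.
  { apply Rmin_pos; auto. apply Rdiv_lt_0_compat; lra. }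
  intros s' Hs'.
  assert (Hs1 : Rabs (s' - s) < rho) by (eapply Rlt_le_trans; [apply Hs'|apply Rmin_l]).
  assert (Hs2 : Rabs (s' - s) < dm / (K0 + 1)) by (eapply Rlt_le_trans; [apply Hs'|apply Rmin_r]).
  set (Dl := (gam s' - gam s)%C).
  assert (HDl : cm Dl <= K0 * Rabs (s' - s)) by apply Hlip.
  assert (Habs := Rabs_pos (s' - s)).
  assert (HDdm : cm Dl < dm).
  { assert (K0 * Rabs (s' - s) < dm); [|lra].
    apply Rle_lt_trans with ((K0 + 1) * Rabs (s' - s)). nra.
    apply (Rmult_lt_reg_r (/ (K0 + 1))). apply Rinv_0_lt_compat; lra.
    replace ((K0 + 1) * Rabs (s' - s) * / (K0 + 1)) with (Rabs (s' - s)) by (field; lra). exact Hs2. }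
  assert (Hpe := Hpath s' Hs1).
  pose (v := (0, c * (s' - s)) : C).
  set (X := (phi (gam s') - phi (gam s) - (M / L) * v)%C).
  assert (Hsnd : snd X = snd (phi (gam s')) - snd (phi (gam s)) - c * fst (M / L)%C * (s' - s)).
  { unfold X, v. destruct (phi (gam s')), (phi (gam s)), (M / L)%C. simpl. ring. }
  rewrite <- Hsnd. eapply Rle_trans. apply snd_le_cm.
  destruct (Req_dec (cm Dl) 0) as [H0|H0].
  - apply Cmod_eq_0 in H0. assert (Eg : gam s' = gam s) by (apply Ceq_sub0; exact H0).
    unfold X. change v with (0, c * (s' - s)). rewrite <- Hpe, Eg.
    replace (phi (gam s) - phi (gam s) - M / L * (Fm (gam s) - Fm (gam s)))%C with (0:C)
      by (field; auto).
    rewrite Cmod_0. apply Rmult_le_pos; lra.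
  - assert (Hpos : 0 < cm Dl < d1).
    { split. assert (H3 := Cmod_ge_0 Dl). lra. eapply Rlt_le_trans; [apply HDdm| apply Rmin_l]. }
    assert (Hpos2 : 0 < cm Dl < d2).
    { split. assert (H3 := Cmod_ge_0 Dl). lra. eapply Rlt_le_trans; [apply HDdm| apply Rmin_r]. }
    assert (B1 := H1 (gam s') Hpos). assert (B2 := H2 (gam s') Hpos2).
    fold Dl in B1, B2.
    set (e1 := (Fm (gam s') - Fm (gam s) - L * Dl)%C) in B1.
    set (e2 := (phi (gam s') - phi (gam s) - M * Dl)%C) in B2.
    assert (HX : X = (e2 - (M / L) * e1)%C).
    { unfold X, e1, e2. change v with (0, c * (s' - s)). rewrite <- Hpe. unfold Dl. field. auto. }
    rewrite HX. eapply Rle_trans. apply cm_sub_bound.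
    rewrite Cmod_mult, Cmod_div by auto. fold A.
    assert (Hb : cm e2 + A * cm e1 <= eta * (A + 1) * cm Dl).
    { assert (A * cm e1 <= A * (eta * cm Dl)) by (apply Rmult_le_compat_l; auto). nra. }
    apply Rle_trans with (eta * (A + 1) * (K0 * Rabs (s' - s))).
    { eapply Rle_trans. apply Hb. apply Rmult_le_compat_l; auto. nra. }
    assert (Hk : eta * (A + 1) * (K0 + 1) = eps) by (unfold eta; field; nra).
    assert (0 <= eta * (A + 1)) by nra.
    assert (eta * (A + 1) * (K0 * Rabs (s' - s)) <= eta * (A + 1) * ((K0 + 1) * Rabs (s' - s))).
    { apply Rmult_le_compat_l; auto. nra. }
    nra.
Qed.

Lemma cont_of_eps (f : R -> R) x0 :
  (forall eps, 0 < eps -> exists d, 0 < d /\ forall x, Rabs (x - x0) < d -> Rabs (f x - f x0) < eps) ->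
  continuity_pt f x0.
Proof.
  intros H eps He. destruct (H eps He) as [d [Hd H']]. exists d. split; auto.
  intros x [_ Hx]. apply H'. exact Hx.
Qed.

Ltac nzc := match goal with H : ?x <> _ |- ?x <> _ => exact H end.

Definition cl (s : R) : R := Rmax 0 (Rmin 1 s).

Lemma cl_range s : 0 <= cl s <= 1.
Proof. unfold cl, Rmax, Rmin. repeat destruct Rle_dec; lra. Qed.

Lemma cl_id s : 0 <= s <= 1 -> cl s = s.
Proof. intros. unfold cl, Rmax, Rmin. repeat destruct Rle_dec; lra. Qed.

Lemma cl_lip s t : Rabs (cl s - cl t) <= Rabs (s - t).
Proof.
  unfold cl, Rmax, Rmin, Rabs. repeat destruct Rle_dec; repeat destruct Rcase_abs; lra.
Qed.

Lemma F_image_convex a : -1 <= a <= 1 -> forall p q : C,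
  image_E (F_alpha a) p -> image_E (F_alpha a) q -> fst p = fst q -> forall t, 0 <= t <= 1 ->
  image_E (F_alpha a) (fst p, snd p + t * (snd q - snd p)).
Proof.
  intros Ha p q [z1 [Hz1 Hp]] [z2 [Hz2 Hq]] Hf t Ht.
  assert (Op : Om a p) by (rewrite <- Hp; apply image_in_Om; auto).
  assert (Oq : Om a q) by (rewrite <- Hq; apply image_in_Om; auto).
  destruct (Om_in_image a _ Ha (Om_convex a p q t Op Oq Hf Ht)) as [z [Hz Hzw]].
  exists z. split; auto.
Qed.

Lemma cm_0r (r : R) : cm (0, r) = Rabs r.
Proof. unfold Complex.Cmod; cbn [fst snd]. replace (0 ^ 2 + r ^ 2) with (r²) by (unfold Rsqr; ring). apply sqrt_Rsqr_abs. Qed.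

Lemma pair_sub (x u v : R) : Cminus (x, u) (x, v) = (0, u - v).
Proof. apply injective_projections; simpl; ring. Qed.

Lemma path_exists a z1 z2 : -1 <= a <= 1 -> cm z1 < 1 -> cm z2 < 1 ->
  fst (F_alpha a z1) = fst (F_alpha a z2) ->
  exists gam : R -> C, (forall s, cm (gam s) < 1) /\
    (forall s, F_alpha a (gam s) = (fst (F_alpha a z1),
        snd (F_alpha a z1) + cl s * (snd (F_alpha a z2) - snd (F_alpha a z1)))) /\
    gam 0 = z1 /\ gam 1 = z2.
Proof.
  intros Ha Hz1 Hz2 Hf.
  assert (Hex : forall s, exists z, cm z < 1 /\ F_alpha a z = (fst (F_alpha a z1),
        snd (F_alpha a z1) + cl s * (snd (F_alpha a z2) - snd (F_alpha a z1)))).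
  { intro s. destruct (F_image_convex a Ha (F_alpha a z1) (F_alpha a z2)) with (t := cl s)
      as [z [Hz Hzw]]; auto.
    exists z1; split; auto. exists z2; split; auto. apply cl_range.
    exists z. auto. }
  exists (fun s => proj1_sig (constructive_indefinite_description _ (Hex s))).
  assert (P : forall s, cm (proj1_sig (constructive_indefinite_description _ (Hex s))) < 1 /\
     F_alpha a (proj1_sig (constructive_indefinite_description _ (Hex s))) = (fst (F_alpha a z1),
        snd (F_alpha a z1) + cl s * (snd (F_alpha a z2) - snd (F_alpha a z1))))
    by (intro s; apply proj2_sig).
  split; [intro s; apply P|]. split; [intro s; apply P|]. split.
  - apply (F_univalent a Ha); auto. apply P. destruct (P 0) as [_ E0]. rewrite E0.
    rewrite cl_id by lra. destruct (F_alpha a z1); simpl. f_equal. ring.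
  - apply (F_univalent a Ha); auto. apply P. destruct (P 1) as [_ E0]. rewrite E0.
    rewrite cl_id by lra. rewrite Hf. destruct (F_alpha a z2); simpl. f_equal. ring.
Qed.

Lemma Re_ratio_pos (hp gp : C) : hp <> (0:C) -> cm (gp / hp)%C < 1 ->
  (hp + gp)%C <> (0:C) /\ 0 < fst ((hp - gp) / (hp + gp))%C.
Proof.
  intros Hh Hw.
  set (om := (gp / hp)%C) in *.
  assert (Hg : gp = (om * hp)%C) by (unfold om; field; exact Hh).
  assert (H1 : (1 + om)%C <> (0:C)) by (apply one_plus_ne; auto).
  assert (Hs : (hp + om * hp)%C <> (0:C)).
  { replace (hp + om * hp)%C with (hp * (1 + om))%C by ring. apply Cmult_neq_0; auto. }
  split.
  - rewrite Hg. exact Hs.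
  - rewrite Hg. replace ((hp - om * hp) / (hp + om * hp))%C with ((1 - om) / (1 + om))%C
      by (field; repeat split; nzc).
    rewrite Re_div. apply Rdiv_lt_0_compat; [|apply nsq_pos; auto].
    apply Cmod_lt1_iff in Hw. destruct om as [u v]; simpl in *. nra.
Qed.

Lemma shear_core a (h g h' g' : C -> C) : -1 <= a <= 1 ->
  analytic_E_with_deriv h h' -> analytic_E_with_deriv g g' -> loc_univ_sense_pres h' g' ->
  (forall z : Cx, E z -> Cadd (h z) (g z) = F_alpha a z) ->
  forall z1 z2, cm z1 < 1 -> cm z2 < 1 -> fst (F_alpha a z1) = fst (F_alpha a z2) ->
  exists gam : R -> C, (forall s, cm (gam s) < 1) /\ (forall s, fst (F_alpha a (gam s)) = fst (F_alpha a z1))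
    /\ gam 0 = z1 /\ gam 1 = z2 /\ continuity (fun s => snd (h (gam s) - g (gam s))%C) /\
    (snd (h z1 - g z1)%C = snd (h z2 - g z2)%C -> F_alpha a z1 = F_alpha a z2).
Proof.
  intros Ha Hh Hg Hlu Hsum z1 z2 Hz1 Hz2 Hf.
  set (phi := fun w => (h w - g w)%C).
  assert (HdF : forall z, cm z < 1 -> has_cderiv (F_alpha a) z (h' z + g' z)%C).
  { intros z Hz. apply cd_local with (f := fun w => (h w + g w)%C) (r := 1 - cm z).
    lra. apply cd_add; [apply Hh|apply Hg]; exact Hz.
    intros w Hw. symmetry. apply Hsum. red. assert (H := Cmod_triangle (w - z)%C z).
    replace (w - z + z)%C with w in H by ring. change (cm w < 1). lra. }
  assert (Hdp : forall z, cm z < 1 -> has_cderiv phi z (h' z - g' z)%C).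
  { intros z Hz. apply cd_sub; [apply Hh|apply Hg]; exact Hz. }
  assert (HLR : forall z, cm z < 1 -> (h' z + g' z)%C <> (0:C) /\
      0 < fst ((h' z - g' z) / (h' z + g' z))%C).
  { intros z Hz. destruct (Hlu z Hz) as [H1 H2]. apply Re_ratio_pos; auto. }
  destruct (path_exists a z1 z2 Ha Hz1 Hz2 Hf) as [gam [HgE [HgF [Hg0 Hg1]]]].
  set (c := snd (F_alpha a z2) - snd (F_alpha a z1)) in *.
  assert (Hlip : forall t, exists K0, 0 <= K0 /\ forall s, cm (gam s - gam t)%C <= K0 * Rabs (s - t)).
  { intro t. destruct (F_invlip a (gam t) Ha (HgE t)) as [K [HK HKb]].
    exists (K * Rabs c). split. apply Rmult_le_pos; [lra|apply Rabs_pos].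
    intro s. eapply Rle_trans. apply HKb; auto.
    rewrite !HgF. 
    rewrite pair_sub, cm_0r.
    replace (snd (F_alpha a z1) + cl s * c - (snd (F_alpha a z1) + cl t * c)) with ((cl s - cl t) * c) by ring.
    rewrite Rabs_mult. rewrite Rmult_assoc. apply Rmult_le_compat_l; [lra|].
    rewrite Rmult_comm. apply Rmult_le_compat_l. apply Rabs_pos. apply cl_lip. }
  set (p := fun s => snd (phi (gam s))).
  assert (Hcont : continuity p).
  { intro s. apply cont_of_eps. intros eps He.
    destruct (cd_cont _ _ _ (Hdp (gam s) (HgE s)) (eps / 2)) as [d [Hd Hb]]; [lra|].
    destruct (Hlip s) as [K0 [HK0 HK0b]].
    exists (d / (K0 + 1)). split. apply Rdiv_lt_0_compat; lra.
    intros x Hx. unfold p.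
    assert (cm (gam x - gam s)%C < d).
    { eapply Rle_lt_trans. apply HK0b. assert (H0 := Rabs_pos (x - s)).
      apply Rle_lt_trans with ((K0 + 1) * Rabs (x - s)). nra.
      apply (Rmult_lt_reg_r (/ (K0 + 1))). apply Rinv_0_lt_compat; lra.
      replace ((K0 + 1) * Rabs (x - s) * / (K0 + 1)) with (Rabs (x - s)) by (field; lra).
      exact Hx. }
    assert (B := Hb (gam x) H).
    replace (snd (phi (gam x)) - snd (phi (gam s))) with (snd (phi (gam x) - phi (gam s))%C)
      by (simpl; ring).
    eapply Rle_lt_trans. apply snd_le_cm. lra. }
  set (Dv := fun s => c * fst ((h' (gam s) - g' (gam s)) / (h' (gam s) + g' (gam s)))%C).
  assert (Hder : forall s, 0 < s < 1 -> is_derive p s (Dv s)).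
  { intros s Hs. apply is_derive_Reals. intros eps He.
    destruct (Hlip s) as [K0 [HK0 HK0b]].
    destruct (HLR (gam s) (HgE s)) as [HL _].
    destruct (chain_im (F_alpha a) phi gam s c K0 (Rmin s (1 - s))
       (h' (gam s) + g' (gam s))%C (h' (gam s) - g' (gam s))%C
       (HdF _ (HgE s)) HL (Hdp _ (HgE s)) HK0) with (eps := eps / 2) as [d [Hd Hb]].
    - apply Rmin_pos; lra.
    - exact HK0b.
    - intros s' Hs'. rewrite !HgF.
      assert (Hs'1 : 0 <= s' <= 1).
      { assert (Rabs (s' - s) < s) by (eapply Rlt_le_trans; [apply Hs'|apply Rmin_l]).
        assert (Rabs (s' - s) < 1 - s) by (eapply Rlt_le_trans; [apply Hs'|apply Rmin_r]).
        unfold Rabs in *. destruct Rcase_abs; lra. }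
      rewrite !cl_id by lra. apply injective_projections; simpl; fold c; ring.
    - lra.
    - exists (mkposreal d Hd). intros hh Hh0 Hhd. simpl in Hhd.
      assert (B := Hb (s + hh)). replace (s + hh - s) with hh in B by ring.
      specialize (B Hhd). unfold p, Dv.
      replace ((snd (phi (gam (s + hh))) - snd (phi (gam s))) / hh -
          c * fst ((h' (gam s) - g' (gam s)) / (h' (gam s) + g' (gam s)))%C)
        with ((snd (phi (gam (s + hh))) - snd (phi (gam s)) -
          c * fst ((h' (gam s) - g' (gam s)) / (h' (gam s) + g' (gam s)))%C * hh) / hh)
        by (field; auto).
      unfold Rdiv. rewrite Rabs_mult, Rabs_inv.
      assert (0 < Rabs hh) by (apply Rabs_pos_lt; auto).
      apply (Rmult_lt_reg_r (Rabs hh)); auto.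
      replace (Rabs (snd (phi (gam (s + hh))) - snd (phi (gam s)) -
        c * fst ((h' (gam s) - g' (gam s)) / (h' (gam s) + g' (gam s)))%C * hh) * / Rabs hh * Rabs hh)
      with (Rabs (snd (phi (gam (s + hh))) - snd (phi (gam s)) -
        c * fst ((h' (gam s) - g' (gam s)) / (h' (gam s) + g' (gam s)))%C * hh)) by (field; lra).
      nra. }
  exists gam. split; auto. split.
  { intro s. rewrite HgF. reflexivity. }
  split; auto. split; auto. split.
  { exact Hcont. }
  intro Hp. 
  destruct (MVT_gen p 0 1 Dv) as [c0 [Hc0 Hmvt]].
  - rewrite Rmin_left, Rmax_right by lra. exact Hder.
  - rewrite Rmin_left, Rmax_right by lra. intros x _. apply Hcont.
  - unfold p in Hmvt. rewrite Hg0, Hg1 in Hmvt. unfold phi in Hmvt.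
    rewrite Hp in Hmvt.
    assert (Hz : c * fst ((h' (gam c0) - g' (gam c0)) / (h' (gam c0) + g' (gam c0)))%C = 0)
      by (unfold Dv in Hmvt; lra).
    destruct (HLR (gam c0) (HgE c0)) as [_ Hpos].
    assert (Hc : c = 0).
    { apply Rmult_integral in Hz. destruct Hz; auto. lra. }
    apply injective_projections; auto. unfold c in Hc. lra.
Qed.

Lemma harm_fst (h g : Cx -> Cx) z : fst (harm h g z) = fst (h z) + fst (g z).
Proof. reflexivity. Qed.
Lemma harm_snd (h g : Cx -> Cx) z : snd (harm h g z) = snd (h z) - snd (g z).
Proof. unfold harm, Cadd, Cconj; simpl. ring. Qed.

Theorem mainTheorem1 (alpha : R) (Halpha : -1 <= alpha <= 1) :
  (forall z : Cx, E z -> exists l : Cx, has_cderiv (F_alpha alpha) z l /\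
      0 < Re (Cmul (Csub Cx1 (Cmul z z)) l))
  /\ univalent_E (F_alpha alpha)
  /\ convex_imag_dir (image_E (F_alpha alpha))
  /\ (forall h g h' g' : Cx -> Cx,
        analytic_E_with_deriv h h' ->
        analytic_E_with_deriv g g' ->
        loc_univ_sense_pres h' g' ->
        h Cx0 = Cx0 -> g Cx0 = Cx0 -> h' Cx0 = Cx1 -> g' Cx0 = Cx0 ->
        (forall z : Cx, E z -> Cadd (h z) (g z) = F_alpha alpha z) ->
        in_SH (harm h g) /\ convex_imag_dir (image_E (harm h g))).
Proof.
  split; [|split; [|split]].
  - intros z Hz. exists (Fd alpha z). split. apply F_deriv; exact Hz.
    exact (part1 alpha z Halpha Hz).
  - intros z w Hz Hw He. exact (F_univalent alpha Halpha z w Hz Hw He).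
  - intros p q Hp Hq Hre t Ht. exact (F_image_convex alpha Halpha p q Hp Hq Hre t Ht).
  - intros h g h' g' Hh Hg Hlu H0 G0 H'0 G'0 Hsum.
    assert (HF : forall z, E z -> fst (F_alpha alpha z) = fst (h z) + fst (g z)).
    { intros z Hz. rewrite <- (Hsum z Hz). reflexivity. }
    assert (Huniv : univalent_E (harm h g)).
    { intros z1 z2 Hz1 Hz2 Heq.
      assert (E1 := f_equal fst Heq). rewrite !harm_fst in E1.
      assert (E2 := f_equal snd Heq). rewrite !harm_snd in E2.
      assert (Hf : fst (F_alpha alpha z1) = fst (F_alpha alpha z2)) by (rewrite !HF; auto).
      destruct (shear_core alpha h g h' g' Halpha Hh Hg Hlu Hsum z1 z2 Hz1 Hz2 Hf)
        as [gam [_ [_ [_ [_ [_ Himp]]]]]].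
      apply (F_univalent alpha Halpha); auto; apply Himp; simpl; exact E2. }
    split.
    + exists h, g, h', g'.
      refine (conj Hh (conj Hg (conj (fun z _ => eq_refl) (conj Hlu (conj Huniv (conj _ H'0)))))).
      unfold harm. rewrite H0, G0. unfold Cadd, Cconj, Cx0; simpl.
      apply injective_projections; simpl; ring.
    + intros p q [z1 [Hz1 Hp]] [z2 [Hz2 Hq]] Hre t Ht. subst p q.
      unfold Re, Im in *. rewrite !harm_fst in Hre. rewrite !harm_snd.
      assert (Hf : fst (F_alpha alpha z1) = fst (F_alpha alpha z2)) by (rewrite !HF; auto).
      destruct (shear_core alpha h g h' g' Halpha Hh Hg Hlu Hsum z1 z2 Hz1 Hz2 Hf)
        as [gam [HgE [HgF [Hg0 [Hg1 [Hcont _]]]]]].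
      set (y := snd (h z1) - snd (g z1) + t * (snd (h z2) - snd (g z2) - (snd (h z1) - snd (g z1)))).
      assert (Hy : Rmin (snd (h (gam 0) - g (gam 0))%C) (snd (h (gam 1) - g (gam 1))%C) <= y <=
                   Rmax (snd (h (gam 0) - g (gam 0))%C) (snd (h (gam 1) - g (gam 1))%C)).
      { rewrite Hg0, Hg1. simpl. unfold y, Rmin, Rmax.
        destruct Rle_dec; split; nra. }
      destruct (IVT_gen _ 0 1 y Hcont Hy) as [s [Hs Hps]].
      exists (gam s). split; [apply HgE|].
      apply injective_projections.
      * rewrite harm_fst, harm_fst. rewrite <- HF by apply HgE. rewrite HgF. rewrite HF; auto.
      * rewrite harm_snd. simpl in Hps. simpl. unfold y in *. lra.
Qed.
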